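(* Let $D>0$ be an integer with $D\equiv0$ or $1\pmod 4$, let $\varepsilon\in\{\pm1\}$, let $m\in\mathbb{Z}_{>0}$, and suppose $v\in\mathbb{Z}$ satisfies $v^2=m(mD+4\varepsilon)$. Then $m$ is a perfect square. *)

(* Defs.v *)
From Stdlib Require Import ZArith.
Open Scope Z_scope.

(* Main.v *)
Require Import Defs.
From Stdlib Require Import ZArith Znumtheory Lia.
Open Scope Z_scope.

Lemma gcd_sq x y : Z.gcd (x*x) (y*y) = Z.gcd x y ^ 2.
Proof.
  destruct (Z.eq_dec (Z.gcd x y) 0) as [H0|H0].
  - apply Z.gcd_eq_0 in H0. destruct H0; subst. reflexivity.
  - set (g := Z.gcd x y) in *.
    assert (Hg : 0 <= g) by apply Z.gcd_nonneg.
    assert (Hc : Z.gcd (x / g) (y / g) = 1) by (apply Z.gcd_div_gcd; lia).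
    assert (Hx : x = g * (x / g)) by (apply Z.divide_div_mul_exact; [lia| apply Z.divide_refl | apply Z.gcd_divide_l] || (apply Z_div_exact_full_2; [lia| apply Zdivide_mod, Z.gcd_divide_l])).
    assert (Hy : y = g * (y / g)) by (apply Z_div_exact_full_2; [lia| apply Zdivide_mod, Z.gcd_divide_r]).
    set (x' := x / g) in *. set (y' := y / g) in *.
    assert (Hc2 : Z.gcd (x'*x') (y'*y') = 1).
    { apply Zgcd_1_rel_prime. apply Zgcd_1_rel_prime in Hc.
      apply rel_prime_mult; apply rel_prime_sym; apply rel_prime_mult; apply rel_prime_sym; auto. }
    rewrite Hx, Hy.
    replace (g * x' * (g * x')) with ((g*g) * (x'*x')) by ring.
    replace (g * y' * (g * y')) with ((g*g) * (y'*y')) by ring.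
    rewrite Z.gcd_mul_mono_l_nonneg by nia. rewrite Hc2. ring.
Qed.

Lemma cop_sq a b c : 0 < a -> Z.gcd a b = 1 -> a*b = c^2 -> a = (Z.gcd a c)^2.
Proof.
  intros Ha Hg Hab. rewrite <- gcd_sq.
  replace (c*c) with (a*b) by (rewrite Hab; ring).
  rewrite Z.gcd_mul_mono_l_nonneg by lia. rewrite Hg. ring.
Qed.

Lemma sq16 v : v^2 mod 16 = 0 \/ v^2 mod 16 = 1 \/ v^2 mod 16 = 4 \/ v^2 mod 16 = 9.
Proof.
  assert (E : v^2 mod 16 = ((v mod 16) * (v mod 16)) mod 16)
    by (rewrite Z.pow_2_r; apply Z.mul_mod; lia).
  rewrite E.
  assert (R : 0 <= v mod 16 < 16) by (apply Z.mod_pos_bound; lia).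
  set (r := v mod 16) in *.
  assert (r = 0 \/ r = 1 \/ r = 2 \/ r = 3 \/ r = 4 \/ r = 5 \/ r = 6 \/ r = 7 \/
          r = 8 \/ r = 9 \/ r = 10 \/ r = 11 \/ r = 12 \/ r = 13 \/ r = 14 \/ r = 15) by lia.
  repeat (destruct H as [H|H]; [rewrite H; compute; tauto|]); rewrite H; compute; tauto.
Qed.

Lemma sq16_0 v : v^2 mod 16 = 0 -> v mod 4 = 0.
Proof.
  assert (E : v^2 mod 16 = ((v mod 16) * (v mod 16)) mod 16)
    by (rewrite Z.pow_2_r; apply Z.mul_mod; lia).
  rewrite E.
  assert (E2 : v mod 4 = (v mod 16) mod 4).
  { replace 16 with (4*4) by reflexivity. rewrite Z.rem_mul_r by lia. 
    rewrite Z.mul_comm, Z.mod_add by lia. rewrite Z.mod_mod by lia. reflexivity. }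
  rewrite E2.
  assert (R : 0 <= v mod 16 < 16) by (apply Z.mod_pos_bound; lia).
  set (r := v mod 16) in *.
  assert (r = 0 \/ r = 1 \/ r = 2 \/ r = 3 \/ r = 4 \/ r = 5 \/ r = 6 \/ r = 7 \/
          r = 8 \/ r = 9 \/ r = 10 \/ r = 11 \/ r = 12 \/ r = 13 \/ r = 14 \/ r = 15) by lia.
  repeat (destruct H as [H|H]; [rewrite H; compute; congruence|]); rewrite H; compute; congruence.
Qed.

Ltac dm x n := pose proof (Z_div_mod_eq_full x n); pose proof (Z.mod_pos_bound x n ltac:(lia)).

Theorem mainTheorem9 (D eps m v : Z)
  (hD : 0 < D) (hDmod : D mod 4 = 0 \/ D mod 4 = 1)
  (heps : eps = 1 \/ eps = -1)
  (hm : 0 < m)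
  (hv : v ^ 2 = m * (m * D + 4 * eps)) :
  exists k : Z, m = k ^ 2.
Proof.
  assert (Hm4 : m mod 4 = 0 \/ m mod 4 = 1 \/ m mod 4 = 2 \/ m mod 4 = 3) by (clear -hm; dm m 4; lia).
  destruct Hm4 as [H0|[H1|[H2|H3]]].
  -
    assert (Em : m = 4 * (m / 4)) by (dm m 4; lia).
    set (m' := m / 4) in *.
    assert (Hv16 : v^2 = 16 * (m' * (m' * D + eps))) by (rewrite hv, Em; ring).
    assert (Hv4 : v mod 4 = 0) by (apply sq16_0; rewrite Hv16, Z.mul_comm; apply Z.mod_mul; lia).
    assert (Ev : v = 4 * (v / 4)) by (dm v 4; lia).
    set (w := v / 4) in *.
    assert (Hw : m' * (m' * D + eps) = w^2) by (rewrite Ev in Hv16; nia).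
    assert (Hg : Z.gcd m' (m' * D + eps) = 1).
    { rewrite Z.add_comm, Z.mul_comm, Z.gcd_add_mult_diag_r.
      destruct heps; subst eps; [apply Z.gcd_1_r|].
      change (-1) with (- (1)); rewrite Z.gcd_opp_r; apply Z.gcd_1_r. }
    exists (2 * Z.gcd m' w). rewrite Em at 1.
    assert (Hp : 0 < m') by lia. rewrite (cop_sq m' _ w Hp Hg Hw) at 1. ring.
  - exists (Z.gcd m v). apply (cop_sq m (m*D+4*eps)); [lia| |lia].
    replace (m*D+4*eps) with (4*eps + D*m) by ring. rewrite Z.gcd_add_mult_diag_r.
    destruct heps; subst eps; [replace (4*1) with 4 by ring | replace (4*-1) with (- (4)) by ring; rewrite Z.gcd_opp_r];
      rewrite Z.gcd_comm, <- Z.gcd_mod by lia; rewrite H1; reflexivity.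
  - exfalso. assert (Em : m = 4 * (m / 4) + 2) by (dm m 4; lia).
    set (q := m / 4) in *.
    destruct hDmod as [HD|HD].
    + assert (ED : D = 4 * (D / 4)) by (dm D 4; lia). set (r := D/4) in *.
      assert (exists k, v^2 = 16*k + 8) as [k Hk].
      { destruct heps; subst eps.
        - exists (4*q*q*r + 4*q*r + r + q). rewrite hv, Em, ED. ring.
        - exists (4*q*q*r + 4*q*r + r - q - 1). rewrite hv, Em, ED. ring. }
      pose proof (sq16 v). dm (v^2) 16. lia.
    + assert (ED : D = 4 * (D / 4) + 1) by (dm D 4; lia). set (r := D/4) in *.
      assert (exists k, v^2 = 16*k + 12) as [k Hk].
      { destruct heps; subst eps.
        - exists (4*q*q*r + 4*q*r + r + q*q + 2*q). rewrite hv, Em, ED. ring.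
        - exists (4*q*q*r + 4*q*r + r + q*q - 1). rewrite hv, Em, ED. ring. }
      pose proof (sq16 v). dm (v^2) 16. lia.
  - exists (Z.gcd m v). apply (cop_sq m (m*D+4*eps)); [lia| |lia].
    replace (m*D+4*eps) with (4*eps + D*m) by ring. rewrite Z.gcd_add_mult_diag_r.
    destruct heps; subst eps; [replace (4*1) with 4 by ring | replace (4*-1) with (- (4)) by ring; rewrite Z.gcd_opp_r];
      rewrite Z.gcd_comm, <- Z.gcd_mod by lia; rewrite H3; reflexivity.
Qed.
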